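(* Let $N\ge2$ and $\mathcal M=(M_{ij})_{1\le i<j\le N}$ a family of real symmetric $2\times2$ matrices. If $Y=\Psi(\mathcal M)\in DD_N$, then $-\phi_{DD}(\mathcal M)\ge-\phi_{SDD}(\mathcal M)\ge -h(Y)$. Moreover, if $M_{ij}=\frac{1}{N-1}I_{2}$ for all $i<j$, then $Y=\Psi(\mathcal M)=I$ and $-\phi_{DD}(\mathcal M)=-\phi_{SDD}(\mathcal M)=-h(Y)=N(N-1)\log(N-1)$.
   Context: $\Psi(\mathcal M)=\sum_{i<j}\Psi_{ij}(M_{ij})$, where $\Psi_{ij}(M)$ is the $N\times N$ matrix whose entries $(i,i),(i,j),(j,i),(j,j)$ are $M(1,1),M(1,2),M(2,1),M(2,2)$ and whose other entries are $0$. $\phi_{DD}(\mathcal M)=\frac12\sum_{i<j}\big[\log(M_{ij}(1,1)^2-M_{ij}(1,2)^2)+\log(M_{ij}(2,2)^2-M_{ij}(1,2)^2)\big]$ with domain $\{M_{ij}(1,1)>|M_{ij}(1,2)|,\ M_{ij}(2,2)>|M_{ij}(1,2)|\ \forall i<j\}$; $\phi_{SDD}(\mathcal M)=\sum_{i<j}\log\big(M_{ij}(1,1)M_{ij}(2,2)-M_{ij}(1,2)^2\big)$ with domain $\{M_{ij}\succ0\}$; $h(Y)=(N-1)\log\det Y-N(N-1)\log(N-1)$ for $Y\succ0$; outside their domains these functions equal $-\infty$. $DD_N$: symmetric $X$ with $X(i,i)\ge\sum_{j\ne i}|X(i,j)|$ for all $i$; $SDD_N$: matrices $DYD$, $D$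 positive diagonal, $Y\in DD_N$. *)

(* Defs.v *)
From HB Require Import structures.
From mathcomp Require Import all_boot all_order all_algebra.
From mathcomp Require Import all_classical all_reals all_analysis.
Set Implicit Arguments. Unset Strict Implicit. Unset Printing Implicit Defensive.
Import Order.TTheory GRing.Theory Num.Theory.
Local Open Scope ring_scope.

(* A family (M_ij)_{i<j} of 2x2 real matrices: only entries with i < j matter.
   Indices 1..2 of the paper are 0..1 here. *)
Definition pairfam (R : realType) (N : nat) := 'I_N -> 'I_N -> 'M[R]_2.

Definition symmetric_mx (R : realType) (n : nat) (A : 'M[R]_n) : Prop := A^T = A.

Definition posdef (R : realType) (n : nat) (A : 'M[R]_n) : Prop :=
  A^T = A /\ forall v : 'cV[R]_n, v != 0 -> 0 < (v^T *m A *m v) 0 0.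

Definition Psi_ij (R : realType) (N : nat) (i j : 'I_N) (A : 'M[R]_2) : 'M[R]_N :=
  \matrix_(k, l)
    (if k == i then (if l == i then A 0 0 else if l == j then A 0 1 else 0)
     else if k == j then (if l == i then A 1 0 else if l == j then A 1 1 else 0)
     else 0).

Definition Psi (R : realType) (N : nat) (M : pairfam R N) : 'M[R]_N :=
  \sum_(i < N) \sum_(j < N | (i < j)%N) Psi_ij i j (M i j).

Definition DD (R : realType) (N : nat) (X : 'M[R]_N) : Prop :=
  X^T = X /\ forall i : 'I_N, \sum_(j < N | j != i) `|X i j| <= X i i.

Local Open Scope ereal_scope.

(* Each pair term is -oo outside the domain; a sum of reals with some -oo
   is -oo, so this equals the paper's convention. *)
Definition phiDD (R : realType) (N : nat) (M : pairfam R N) : \bar R :=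
  \sum_(i < N) \sum_(j < N | (i < j)%N)
    (if ((M i j 0 0 > `|M i j 0 1|) && (M i j 1 1 > `|M i j 0 1|))%R
     then ((2%:R)^-1 * (ln (M i j 0 0 ^+ 2 - M i j 0 1 ^+ 2)
                        + ln (M i j 1 1 ^+ 2 - M i j 0 1 ^+ 2)))%:E
     else -oo).

Definition phiSDD (R : realType) (N : nat) (M : pairfam R N) : \bar R :=
  \sum_(i < N) \sum_(j < N | (i < j)%N)
    (if `[< posdef (M i j) >]
     then (ln (M i j 0 0 * M i j 1 1 - M i j 0 1 ^+ 2))%:E
     else -oo).

Definition hfun (R : realType) (N : nat) (Y : 'M[R]_N) : \bar R :=
  if `[< posdef Y >]
  then ((N.-1)%:R * ln (\det Y) - (N * N.-1)%:R * ln ((N.-1)%:R))%:E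
  else -oo.

(* Main.v *)
Require Import Defs.
From HB Require Import structures.
From mathcomp Require Import all_boot all_order all_algebra.
From mathcomp Require Import all_classical all_reals all_analysis.
From mathcomp Require Import ring lra.
Set Implicit Arguments. Unset Strict Implicit. Unset Printing Implicit Defensive.
Import Order.TTheory GRing.Theory Num.Theory.
Local Open Scope ring_scope.

Lemma ln_ratio (R : realType) (u m : R) : 0 < u -> 0 < m -> ln u <= ln m + u / m - 1.
Proof.
move=> u0 m0.
have um : 0 < u / m by rewrite divr_gt0.
have -> : ln u = ln m + ln (u / m).
  by rewrite -lnM ?posrE // mulrC divfK // gt_eqF.
have h' : -1 < u / m - 1 by rewrite -subr_gt0 opprK subrK.
have := le_ln1Dx h'; rewrite (addrC 1) subrK => h2.
by rewrite -addrA lerD2l.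
Qed.

Lemma jensen3 (R : realType) (w1 w2 w3 x1 x2 x3 : R) :
  0 <= w1 -> 0 <= w2 -> 0 <= w3 -> w1 + w2 + w3 = 1 ->
  0 < x1 -> 0 < x2 -> 0 < x3 ->
  w1 * ln x1 + w2 * ln x2 + w3 * ln x3 <= ln (w1 * x1 + w2 * x2 + w3 * x3).
Proof.
move=> h1 h2 h3 hs p1 p2 p3.
set m := w1 * x1 + w2 * x2 + w3 * x3.
have m0 : 0 < m.
  rewrite /m; have [q1|q1] := lerP w1 0; last by have := mulr_gt0 q1 p1; nra.
  have [q2|q2] := lerP w2 0; last by have := mulr_gt0 q2 p2; nra.
  have q3 : 0 < w3 by lra.
  by have := mulr_gt0 q3 p3; nra.
have e1 := ln_ratio p1 m0; have e2 := ln_ratio p2 m0; have e3 := ln_ratio p3 m0.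
have f1 := ler_wpM2l h1 e1; have f2 := ler_wpM2l h2 e2; have f3 := ler_wpM2l h3 e3.
have hm : w1 * (x1 / m) + w2 * (x2 / m) + w3 * (x3 / m) = 1.
  by rewrite !mulrA -!mulrDl divff // gt_eqF.
have hl : (w1 + w2 + w3) * ln m = ln m by rewrite hs mul1r.
lra.
Qed.

Lemma lnMp (R : realType) (x y : R) : 0 < x -> 0 < y -> ln (x * y) = ln x + ln y.
Proof. by move=> hx hy; rewrite lnM ?posrE. Qed.

Lemma pair_ineq (R : realType) (a b c x y n : R) :
  0 < a -> 0 < a * c - b ^+ 2 -> 0 < x -> 0 < y -> 1 <= n ->
  n * ln (a * c - b ^+ 2) + ln (n * x) + ln (n * y) + 2 * (n + 1) * (ln (n + 1) - ln n)
  <= (n + 1) * ln ((a + x) * (c + y) - b ^+ 2).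
Proof.
move=> a0 D0 x0 y0 n1.
set D := a * c - b ^+ 2 in D0 *.
have c0 : 0 < c.
  have := sqr_ge0 b; rewrite /D in D0; nra.
have n0 : 0 < n by lra.
have n10 : 0 < n + 1 by lra.
pose r := (n + 1) / n.
have r0 : 0 < r by rewrite divr_gt0.
pose X1 := D * r ^+ 2.
pose X2 := x * y * (n + 1) ^+ 2.
pose X3 := (a * y + c * x) * (n + 1) ^+ 2 / (2 * n).
pose w1 := (n / (n + 1)) ^+ 2.
pose w2 := ((n + 1)^-1) ^+ 2.
pose w3 := 2 * n / (n + 1) ^+ 2.
have X10 : 0 < X1 by rewrite /X1 mulr_gt0 // exprn_gt0.
have X20 : 0 < X2 by rewrite /X2 !mulr_gt0 // exprn_gt0.
have X30 : 0 < X3.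
  rewrite /X3 !mulr_gt0 ?exprn_gt0 ?invr_gt0 //; last by lra.
  by rewrite addr_gt0 // mulr_gt0.
have w10 : 0 <= w1 by rewrite /w1 exprn_ge0 // divr_ge0 // ltW.
have w20 : 0 <= w2 by rewrite /w2 exprn_ge0 // invr_ge0 ltW.
have w30 : 0 <= w3 by rewrite /w3 divr_ge0 ?exprn_ge0 ?ltW //; lra.
have nn0 : n != 0 by rewrite gt_eqF.
have n1n0 : n + 1 != 0 by rewrite gt_eqF.
have ws : w1 + w2 + w3 = 1.
  by rewrite /w1 /w2 /w3; field; rewrite ?nn0 ?n1n0 ?pnatr_eq0.
have Hed : (a + x) * (c + y) - b ^+ 2 = w1 * X1 + w2 * X2 + w3 * X3.
  rewrite /w1 /w2 /w3 /X1 /X2 /X3 /r /D; field; by rewrite nn0 n1n0.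
have J := jensen3 w10 w20 w30 ws X10 X20 X30.
rewrite -Hed in J.
have X3X : X1 * X2 <= X3 ^+ 2.
  have e : X3 ^+ 2 - X1 * X2 = (n + 1) ^+ 4 / (4 * n ^+ 2) * ((a * y - c * x) ^+ 2 + 4 * b ^+ 2 * x * y).
    by rewrite /X1 /X2 /X3 /r /D; field; rewrite ?nn0 ?n1n0 ?pnatr_eq0.
  rewrite -subr_ge0 e; apply: mulr_ge0.
    by rewrite divr_ge0 ?exprn_ge0 ?mulr_ge0 ?exprn_ge0 ?ltW //; lra.
  apply: addr_ge0; first exact: sqr_ge0.
  have := sqr_ge0 b; have := mulr_gt0 x0 y0; nra.
have L3 : ln X1 + ln X2 <= 2 * ln X3.
  rewrite -lnMp // mulr_natl -lnXn //.
  by rewrite ler_ln ?posrE ?(mulr_gt0 X10 X20) ?(exprn_gt0 _ X30).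
have lnr : ln r = ln (n + 1) - ln n by rewrite /r lnMp ?invr_gt0 // lnV ?posrE.
have LX1 : ln X1 = ln D + 2 * (ln (n + 1) - ln n).
  by rewrite /X1 lnMp ?exprn_gt0 // lnXn // lnr mulr_natl.
have LX2 : ln X2 = ln x + ln y + 2 * ln (n + 1) by rewrite /X2 lnMp ?mulr_gt0 ?exprn_gt0 // lnMp // lnXn // mulr_natl.
have Lnx : ln (n * x) = ln n + ln x by rewrite lnMp.
have Lny : ln (n * y) = ln n + ln y by rewrite lnMp.
have E1 : (n + 1) * (w1 + w3 / 2) = n.
  by rewrite /w1 /w3; field; rewrite ?nn0 ?n1n0 ?pnatr_eq0.
have E2 : (n + 1) * (w2 + w3 / 2) = 1.
  by rewrite /w2 /w3; field; rewrite ?nn0 ?n1n0 ?pnatr_eq0.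
have K : (n + 1) * w3 * (ln X1 + ln X2) <= (n + 1) * w3 * (2 * ln X3).
  by apply: ler_wpM2l; [apply: mulr_ge0 => //; exact: ltW | exact: L3].
have J' := ler_wpM2l (ltW n10) J.
rewrite Lnx Lny.
set LD := ln ((a + x) * (c + y) - b ^+ 2) in J' *.
have H1 : n * ln X1 + ln X2 <= (n + 1) * LD.
  apply: le_trans J'.
  have -> : n * ln X1 + ln X2 = (n + 1) * (w1 + w3 / 2) * ln X1 + (n + 1) * (w2 + w3 / 2) * ln X2
    by rewrite E1 E2 mul1r.
  set A := ln X1 in K *; set B := ln X2 in K *; set C := ln X3 in K *.
  have -> : (n + 1) * (w1 * A + w2 * B + w3 * C) = (n + 1) * w1 * A + (n + 1) * w2 * B + (n + 1) * w3 * (2 * C) / 2 by field.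
  have -> : (n + 1) * (w1 + w3 / 2) * A + (n + 1) * (w2 + w3 / 2) * B = (n + 1) * w1 * A + (n + 1) * w2 * B + (n + 1) * w3 * (A + B) / 2 by field.
  lra.
rewrite LX1 LX2 in H1.
lra.
Qed.

Lemma pairsum (R : realType) (m : nat) (g : 'I_m -> R) :
  \sum_(i < m) \sum_(j < m | (i < j)%N) (g i + g j) = (m.-1)%:R * \sum_(i < m) g i.
Proof.
under eq_bigr do rewrite big_split /=.
rewrite big_split /=.
have -> : \sum_(i < m) \sum_(j < m | (i < j)%N) g j = \sum_(i < m) \sum_(j < m | (j < i)%N) g i.
  under eq_bigr do rewrite big_mkcond /=.
  rewrite exchange_big /=.
  by apply: eq_bigr => i _; rewrite [RHS]big_mkcond.
rewrite -big_split /= mulr_sumr; apply: eq_bigr => i _.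
rewrite big_mkcond [X in _ + X]big_mkcond -big_split /=.
rewrite (eq_bigr (fun j : 'I_m => if j != i then g i else 0)); last first.
  move=> j _; rewrite -(inj_eq val_inj) /= neq_ltn.
  by case: ltngtP => h; rewrite ?addr0 ?add0r.
rewrite -big_mkcond /= sumr_const cardC1 card_ord mulr_natl.
by [].
Qed.

Lemma pairsplit (R : realType) (m : nat) (F : 'I_m.+1 -> 'I_m.+1 -> R) :
  \sum_(i < m.+1) \sum_(j < m.+1 | (i < j)%N) F i j =
  \sum_(k < m) F 0 (lift 0 k) +
  \sum_(i < m) \sum_(j < m | (i < j)%N) F (lift 0 i) (lift 0 j).
Proof.
rewrite big_ord_recl; congr (_ + _).
  rewrite big_mkcond big_ord_recl /= add0r.
  by apply: eq_bigr => k _.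
apply: eq_bigr => i _.
rewrite big_mkcond big_ord_recl /= ?lift0 add0r [RHS]big_mkcond.
by apply: eq_bigr => j _; rewrite ?lift0 /= ?ltnS.
Qed.



Lemma amgm (R : realType) (n : nat) (f : 'I_n -> R) : (0 < n)%N -> (forall i, 0 < f i) ->
  \sum_i ln (f i) + n%:R * ln n%:R <= n%:R * ln (\sum_i f i).
Proof.
move=> n0 fp.
set A := \sum_i f i.
have A0 : 0 < A.
  rewrite /A; case: n n0 f fp {A} => // n' _ f fp.
  rewrite big_ord_recl; apply: ltr_pwDl => //.
  by apply: sumr_ge0 => i _; apply: ltW.
have nR : 0 < n%:R :> R by rewrite ltr0n.
pose m := A / n%:R.
have m0 : 0 < m by rewrite divr_gt0.
have H : \sum_i ln (f i) <= \sum_(i < n) (ln m + f i / m - 1) by apply: ler_sum => i _; apply: ln_ratio.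
have E : \sum_(i < n) (ln m + f i / m - 1) = n%:R * ln m + A / m - n%:R.
  rewrite !big_split /= sumr_const card_ord -mulr_suml sumrN sumr_const card_ord.
  by rewrite mulr_natl.
have Am : A / m = n%:R by rewrite /m invf_div mulrC divfK ?gt_eqF.
have lm : ln m = ln A - ln n%:R by rewrite /m lnM ?posrE ?invr_gt0 // lnV ?posrE.
rewrite E Am lm in H.
lra.
Qed.

Definition schur (R : realType) (N : nat) (Y : 'M[R]_N.+1) : 'M[R]_N :=
  \matrix_(j, k) (Y (lift 0 j) (lift 0 k) - Y (lift 0 j) 0 * Y 0 (lift 0 k) / Y 0 0).

Lemma schur_det (R : realType) (N : nat) (Y : 'M[R]_N.+1) : Y 0 0 != 0 ->
  \det Y = Y 0 0 * \det (schur Y).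
Proof.
move=> Y0.
pose E : 'M[R]_N.+1 := \matrix_(i, j) (if (j == 0) && (i != 0) then - (Y i 0 / Y 0 0) else 0).
pose L : 'M[R]_N.+1 := 1%:M + E.
have dL : \det L = 1.
  rewrite det_trig; last first.
    apply/is_trig_mxP => i j lij; rewrite !mxE.
    have -> : (i == j) = false by apply/negbTE; rewrite -(inj_eq val_inj) /= neq_ltn lij.
    have -> : (j == 0) = false by apply/negbTE; rewrite -(inj_eq val_inj) /=; case: (nat_of_ord j) lij.
    by rewrite addr0.
  by apply: big1 => i _; rewrite !mxE eqxx andbN addr0.
pose Z := L *m Y.
have dZ : \det Z = \det Y by rewrite det_mulmx dL mul1r.
have EY : forall i k, (E *m Y) i k = (if i != 0 then - (Y i 0 / Y 0 0) * Y 0 k else 0).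
  move=> i k; rewrite mxE big_ord_recl /= big1 ?addr0.
    by rewrite mxE eqxx /=; case: (i != 0); rewrite ?mul0r.
  by move=> j _; rewrite mxE /= mul0r.
have ZE : forall i k, Z i k = Y i k + (if i != 0 then - (Y i 0 / Y 0 0) * Y 0 k else 0).
  by move=> i k; rewrite /Z /L mulmxDl mul1mx mxE EY.
clearbody Z.
rewrite -dZ (expand_det_col _ 0) big_ord_recl big1 ?addr0; last first.
  move=> i _; rewrite ZE /=.
  by rewrite mulNr divfK // subrr mul0r.
rewrite ZE eqxx /= addr0 /cofactor /= expr0 mul1r; congr (_ * \det _).
apply/matrixP => j k; rewrite !mxE ZE.
by rewrite mulNr mulrAC.
Qed.



Definition QF (R : realType) (n : nat) (Y : 'M[R]_n) (x : 'I_n -> R) : R :=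
  \sum_i \sum_j x i * Y i j * x j.

Definition ext (R : realType) (N : nat) (t : R) (v : 'I_N -> R) : 'I_N.+1 -> R :=
  fun i => match unlift 0 i with Some j => v j | None => t end.

Lemma ext0 (R : realType) (N : nat) (t : R) (v : 'I_N -> R) : ext t v 0 = t.
Proof. by rewrite /ext unlift_none. Qed.

Lemma extS (R : realType) (N : nat) (t : R) (v : 'I_N -> R) j : ext t v (lift 0 j) = v j.
Proof. by rewrite /ext liftK. Qed.

Lemma QF_split (R : realType) (N : nat) (Y : 'M[R]_N.+1) x :
  QF Y x = x 0 * Y 0 0 * x 0 + \sum_k x 0 * Y 0 (lift 0 k) * x (lift 0 k)
     + \sum_j x (lift 0 j) * Y (lift 0 j) 0 * x 0
     + \sum_j \sum_k x (lift 0 j) * Y (lift 0 j) (lift 0 k) * x (lift 0 k).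
Proof.
rewrite /QF big_ord_recl big_ord_recl -!addrA; congr (_ + _); congr (_ + _).
under eq_bigr do rewrite big_ord_recl.
by rewrite big_split.
Qed.

Lemma QF_schur (R : realType) (N : nat) (Y : 'M[R]_N.+1) (v : 'I_N -> R) :
  Y^T = Y -> Y 0 0 != 0 ->
  QF Y (ext (- (\sum_k Y 0 (lift 0 k) * v k) / Y 0 0) v) = QF (schur Y) v.
Proof.
move=> Ys Y0.
have Ysym : forall i j, Y j i = Y i j by move=> i j; rewrite -{1}Ys mxE.
rewrite QF_split !ext0.
set s := \sum_k Y 0 (lift 0 k) * v k.
set t := - s / Y 0 0.
under eq_bigr do rewrite extS.
under [X in _ + X + _]eq_bigr do rewrite extS.
under [X in _ + X]eq_bigr do under eq_bigr do rewrite !extS.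
have e1 : \sum_k t * Y 0 (lift 0 k) * v k = t * s.
  by rewrite /s mulr_sumr; apply: eq_bigr => k _; rewrite mulrA.
have e2 : \sum_j v j * Y (lift 0 j) 0 * t = t * s.
  by rewrite /s mulr_sumr; apply: eq_bigr => k _; rewrite Ysym; ring.
rewrite e1 e2 /QF.
have e3 : \sum_j \sum_k v j * schur Y j k * v k =
   \sum_j \sum_k v j * Y (lift 0 j) (lift 0 k) * v k - s * s / Y 0 0.
  rewrite -mulrA {1}/s mulr_suml -sumrB; apply: eq_bigr => j _.
  rewrite /s mulr_suml mulr_sumr -sumrB; apply: eq_bigr => k _.
  rewrite mxE (Ysym 0 (lift 0 j)); ring.
by rewrite e3 /t; field.
Qed.

Definition qf (R : realType) (M : 'M[R]_2) (x y : R) : R :=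
  M 0 0 * x ^+ 2 + (M 0 1 + M 1 0) * x * y + M 1 1 * y ^+ 2.
Definition det2 (R : realType) (M : 'M[R]_2) : R := M 0 0 * M 1 1 - M 0 1 ^+ 2.
Definition PD2 (R : realType) (M : 'M[R]_2) : Prop :=
  M 1 0 = M 0 1 /\ 0 < M 0 0 /\ 0 < det2 M.
Definition PS (R : realType) (n : nat) (M : 'I_n -> 'I_n -> 'M[R]_2) (x : 'I_n -> R) : R :=
  \sum_(i < n) \sum_(j < n | (i < j)%N) qf (M i j) (x i) (x j).

Lemma qf_lb (R : realType) (M : 'M[R]_2) t y : PD2 M ->
  det2 M / M 0 0 * y ^+ 2 <= qf M t y.
Proof.
case=> s [a0 _]; rewrite -subr_ge0.
have -> : qf M t y - det2 M / M 0 0 * y ^+ 2 = (M 0 0 * t + M 0 1 * y) ^+ 2 / M 0 0.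
  by rewrite /qf /det2 s; field; rewrite gt_eqF.
by rewrite divr_ge0 ?sqr_ge0 // ltW.
Qed.

Lemma qf_ge0 (R : realType) (M : 'M[R]_2) t y : PD2 M -> 0 <= qf M t y.
Proof.
move=> P; apply: le_trans (qf_lb t y P).
case: P => _ [a0 d0]; by rewrite mulr_ge0 ?sqr_ge0 // divr_ge0 // ltW.
Qed.


Lemma schur_bound (R : realType) (N : nat) (M : 'I_N.+1 -> 'I_N.+1 -> 'M[R]_2) (Y : 'M[R]_N.+1) :
  (0 < N)%N -> Y^T = Y -> (forall i j : 'I_N.+1, (i < j)%N -> PD2 (M i j)) ->
  (forall x, PS M x <= QF Y x) ->
  \sum_k M 0 (lift 0 k) 0 0 <= Y 0 0 /\
  forall v, \sum_k det2 (M 0 (lift 0 k)) / M 0 (lift 0 k) 0 0 * v k ^+ 2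
            + PS (fun j k => M (lift 0 j) (lift 0 k)) v <= QF (schur Y) v.
Proof.
move=> n0 Ys PD H.
have PS_split : forall x, PS M x = \sum_k qf (M 0 (lift 0 k)) (x 0) (x (lift 0 k))
    + PS (fun j k => M (lift 0 j) (lift 0 k)) (fun j => x (lift 0 j)).
  by move=> x; rewrite /PS (pairsplit (fun i j => qf (M i j) (x i) (x j))).
have HA : \sum_k M 0 (lift 0 k) 0 0 <= Y 0 0.
  have := H (ext 1 (fun _ => 0)).
  rewrite PS_split QF_split !ext0.
  under eq_bigr do rewrite extS.
  under [X in _ + X <= _]eq_bigr do rewrite extS.
  under [X in _ <= _ + X + _]eq_bigr do rewrite extS.
  under [X in _ <= _ + X + _ + _]eq_bigr do rewrite extS.
  under [X in _ <= _ + X]eq_bigr do under eq_bigr do rewrite !extS.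
  rewrite [X in _ + X <= _]big1; last first.
    by move=> i _; apply: big1 => j _; rewrite ?extS /qf !expr0n /= ?mulr0 ?mul0r ?addr0.
  rewrite [X in _ <= _ + X]big1; last by move=> i _; apply: big1 => j _; rewrite !mulr0.
  rewrite [X in _ <= _ + X + _]big1; last by move=> i _; rewrite !mul0r.
  rewrite [X in _ <= _ + X + _ + _]big1; last by move=> i _; rewrite !mulr0.
  rewrite mulr1 mul1r !addr0.
  move=> h; apply: le_trans h; rewrite le_eqVlt; apply/orP; left; apply/eqP.
  by apply: eq_bigr => k _; rewrite /qf expr1n expr0n /= !mulr0 mulr1 !addr0.
split=> // v.
have A0 : 0 < \sum_k M 0 (lift 0 k) 0 0.
  rewrite (bigD1 (Ordinal n0)) //=; apply: ltr_pwDl.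
    by case: (PD 0 (lift 0 (Ordinal n0))) => // _ [].
  by apply: sumr_ge0 => i _; case: (PD 0 (lift 0 i)) => // _ [] /ltW.
have Y0 : Y 0 0 != 0 by rewrite gt_eqF // (lt_le_trans A0 HA).
rewrite -QF_schur //.
set t := - _ / _.
apply: le_trans (H _); rewrite PS_split ext0.
under [X in _ <= X + _]eq_bigr do rewrite extS.
have -> : (fun j => ext t v (lift 0 j)) = v by apply/funext => j; rewrite extS.
rewrite lerD2r; apply: ler_sum => k _; apply: qf_lb; exact: PD.
Qed.

Lemma det2_add_pos (R : realType) (a b c x y : R) :
  0 < a -> 0 < a * c - b ^+ 2 -> 0 < x -> 0 < y -> 0 < (a + x) * (c + y) - (b + 0) ^+ 2.
Proof.
move=> a0 D0 x0 y0; rewrite addr0.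
have c0 : 0 < c by have := sqr_ge0 b; nra.
have e : (a + x) * (c + y) - b ^+ 2 = (a * c - b ^+ 2) + a * y + c * x + x * y by ring.
rewrite e; have := mulr_gt0 a0 y0; have := mulr_gt0 c0 x0; have := mulr_gt0 x0 y0; lra.
Qed.

Lemma key (R : realType) (N : nat) : forall (M : 'I_N.+1 -> 'I_N.+1 -> 'M[R]_2) (Y : 'M[R]_N.+1),
  (0 < N)%N -> Y^T = Y -> (forall i j : 'I_N.+1, (i < j)%N -> PD2 (M i j)) ->
  (forall x, PS M x <= QF Y x) ->
  0 < \det Y /\
  \sum_(i < N.+1) \sum_(j < N.+1 | (i < j)%N) ln (det2 (M i j)) + (N.+1 * N)%:R * ln N%:R
    <= N%:R * ln (\det Y).
Proof.
elim: N => [//|N IH] M Y _ Ys PD H.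
have [HA HB] := schur_bound (ltn0Sn N) Ys PD H.
pose a := fun k : 'I_N.+1 => M 0 (lift 0 k) 0 0.
pose d := fun k : 'I_N.+1 => det2 (M 0 (lift 0 k)) / a k.
have PD0 : forall k, PD2 (M 0 (lift 0 k)) by move=> k; apply: PD; rewrite lift0.
have ap : forall k, 0 < a k by move=> k; case: (PD0 k) => _ [].
have dp : forall k, 0 < d k by move=> k; rewrite /d divr_gt0 //; case: (PD0 k) => _ [].
have A0 : 0 < \sum_k a k.
  rewrite big_ord_recl; apply: ltr_pwDl => //.
  by apply: sumr_ge0 => i _; apply: ltW.
have Y00 : 0 < Y 0 0 by apply: lt_le_trans HA.
have dY : \det Y = Y 0 0 * \det (schur Y) by apply: schur_det; rewrite gt_eqF.
have Ysym : forall i j, Y j i = Y i j by move=> i j; rewrite -{1}Ys mxE.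
have Ssym : (schur Y)^T = schur Y.
  apply/matrixP => i j; rewrite !mxE (Ysym (lift 0 i) (lift 0 j)) (Ysym 0 (lift 0 j)) (Ysym 0 (lift 0 i)).
  by rewrite (mulrC (Y 0 (lift 0 j))).
have lsplit := pairsplit (fun i j => ln (det2 (M i j))).
have ld : forall k, ln (det2 (M 0 (lift 0 k))) = ln (a k) + ln (d k).
  by move=> k; rewrite -lnMp // /d mulrC divfK // gt_eqF.
have am := amgm (ltn0Sn N) ap.
have lA : ln (\sum_k a k) <= ln (Y 0 0) by rewrite ler_ln ?posrE.
have [N0|Npos] := posnP N.
  subst N.
  have := HB (fun _ => 1).
  rewrite /PS /QF !big_ord1 big_mkcond big_ord1 /= expr1n !mulr1 mul1r addr0 => hS.
  have dp0 := dp 0.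
  have hdet : det2 (M 0 (lift 0 0)) <= \det Y.
    rewrite dY det_mx11 (_ : det2 _ = a 0 * d 0); last by rewrite /d mulrC divfK // gt_eqF.
    apply: ler_pM => //; [exact: ltW | exact: ltW | apply: le_trans HA; by rewrite big_ord1].
  have dpos : 0 < \det Y by apply: lt_le_trans hdet; case: (PD0 0) => _ [].
  split => //.
  rewrite lsplit big_ord1 big_ord1 big_mkcond big_ord1 /= addr0 ln1 mulr0 addr0 mul1r.
  by rewrite ler_ln ?posrE //; case: (PD0 0) => _ [].
pose nR : R := N%:R.
have nR1 : 1 <= nR by rewrite /nR ler1n.
have nR0 : nR != 0 by rewrite /nR pnatr_eq0 -lt0n.
pose M' : 'I_N.+1 -> 'I_N.+1 -> 'M[R]_2 := fun j k =>
  \matrix_(r, s) (M (lift 0 j) (lift 0 k) r s + (if r == s then (if r == 0 then d j else d k) / nR else 0)).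
have M'00 : forall j k, M' j k 0 0 = M (lift 0 j) (lift 0 k) 0 0 + d j / nR by move=> j k; rewrite mxE.
have M'11 : forall j k, M' j k 1 1 = M (lift 0 j) (lift 0 k) 1 1 + d k / nR by move=> j k; rewrite mxE.
have M'01 : forall j k, M' j k 0 1 = M (lift 0 j) (lift 0 k) 0 1 + 0 by move=> j k; rewrite mxE.
have M'10 : forall j k, M' j k 1 0 = M (lift 0 j) (lift 0 k) 1 0 + 0 by move=> j k; rewrite mxE.
have PDl : forall j k : 'I_N.+1, (j < k)%N -> PD2 (M (lift 0 j) (lift 0 k)).
  by move=> j k jk; apply: PD; rewrite !lift0 ltnS.
have xp : forall j, 0 < d j / nR by move=> j; rewrite divr_gt0 // /nR ltr0n.
have PD' : forall j k : 'I_N.+1, (j < k)%N -> PD2 (M' j k).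
  move=> j k jk; have [s [a0 D0]] := PDl j k jk.
  split; first by rewrite M'10 M'01 s.
  split; first by rewrite M'00 addr_gt0.
  by rewrite /det2 M'00 M'11 M'01; apply: det2_add_pos.
have H' : forall v, PS M' v <= QF (schur Y) v.
  move=> v; apply: le_trans (HB v).
  have -> : PS M' v = PS (fun j k => M (lift 0 j) (lift 0 k)) v +
      \sum_(i < N.+1) \sum_(j < N.+1 | (i < j)%N) (d i / nR * v i ^+ 2 + d j / nR * v j ^+ 2).
    rewrite /PS -big_split /=; apply: eq_bigr => i _; rewrite -big_split /=; apply: eq_bigr => j _.
    rewrite /qf M'00 M'11 M'01 M'10; ring.
  rewrite pairsum addrC le_eqVlt; apply/orP; left; apply/eqP; congr (_ + _).
  rewrite mulr_sumr; apply: eq_bigr => i _; rewrite -/nR; rewrite mulrA (mulrC nR) divfK //.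
have [dS IHi] := IH M' (schur Y) Npos Ssym PD' H'.
split; first by rewrite dY mulr_gt0.
pose K := (nR + 1) * (ln (nR + 1) - ln nR).
have SP : \sum_(i < N.+1) \sum_(j < N.+1 | (i < j)%N)
      (nR * ln (det2 (M (lift 0 i) (lift 0 j))) + ((ln (d i) + K) + (ln (d j) + K)))
    <= \sum_(i < N.+1) \sum_(j < N.+1 | (i < j)%N) ((nR + 1) * ln (det2 (M' i j))).
  apply: ler_sum => i _; apply: ler_sum => j ij.
  have [s [a0 D0]] := PDl i j ij.
  have := pair_ineq (b := M (lift 0 i) (lift 0 j) 0 1) (c := M (lift 0 i) (lift 0 j) 1 1) a0 D0 (xp i) (xp j) nR1.
  rewrite /det2 M'00 M'11 M'01 addr0 !(mulrC nR) !divfK //.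
  rewrite /K; lra.
set Sl := \sum_(i < N.+1) \sum_(j < N.+1 | (i < j)%N) ln (det2 (M (lift 0 i) (lift 0 j))).
set S' := \sum_(i < N.+1) \sum_(j < N.+1 | (i < j)%N) ln (det2 (M' i j)).
set La := \sum_k ln (a k).
set Ld := \sum_k ln (d k).
have SP' : nR * Sl + nR * (Ld + (nR + 1) * K) <= (nR + 1) * S'.
  move: SP.
  have e : forall i : 'I_N.+1, \sum_(j < N.+1 | (i < j)%N)
      (nR * ln (det2 (M (lift 0 i) (lift 0 j))) + ((ln (d i) + K) + (ln (d j) + K))) =
      nR * \sum_(j < N.+1 | (i < j)%N) ln (det2 (M (lift 0 i) (lift 0 j)))
      + \sum_(j < N.+1 | (i < j)%N) ((ln (d i) + K) + (ln (d j) + K)).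
    by move=> i; rewrite big_split /= mulr_sumr.
  under eq_bigr do rewrite e.
  rewrite big_split /= (pairsum (fun i => ln (d i) + K)) -mulr_sumr big_split /= sumr_const card_ord.
  rewrite -/nR -/Sl -/Ld.
  have -> : \sum_(i < N.+1) \sum_(j < N.+1 | (i < j)%N) ((nR + 1) * ln (det2 (M' i j))) = (nR + 1) * S'.
    by rewrite /S' mulr_sumr; apply: eq_bigr => i _; rewrite mulr_sumr.
  by rewrite -mulr_natl -natr1 -/nR.
rewrite /K in SP'.
have Ld0 : \sum_k ln (det2 (M 0 (lift 0 k))) = La + Ld.
  by rewrite /La /Ld -big_split; apply: eq_bigr => k _; exact: ld k.
rewrite lsplit /= Ld0 -/Sl dY lnMp //.
rewrite natrM -!natr1 -/nR.
rewrite natrM -!natr1 -/nR -/S' in IHi.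
rewrite -!natr1 -/nR -/La in am.
have h1 := ler_wpM2l (ltW (ltr_pwDr ltr01 (le_trans ler01 nR1))) IHi.
have h2 := ler_wpM2l (ltW (ltr_pwDr ltr01 (le_trans ler01 nR1))) lA.
set lS := ln (\det (schur Y)) in h1 *.
have T : 0 <= nR * ((nR + 1) * lS - (Sl + Ld + (nR + 1) ^+ 2 * ln (nR + 1))) by lra.
rewrite pmulr_rge0 in T; last by apply: lt_le_trans nR1.
lra.
Qed.

Lemma sum2 (R : realType) (F : 'I_2 -> R) : \sum_(i < 2) F i = F 0 + F 1.
Proof. by rewrite big_ord_recl big_ord_recl big_ord0 addr0; congr (F _ + F _); apply: val_inj. Qed.

Lemma QF2 (R : realType) (A : 'M[R]_2) x : QF A x = qf A (x 0) (x 1).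
Proof. by rewrite /QF /qf !sum2; ring. Qed.

Lemma QF_mx (R : realType) (n : nat) (A : 'M[R]_n) (v : 'cV[R]_n) :
  (v^T *m A *m v) 0 0 = QF A (fun i => v i 0).
Proof.
rewrite mxE /QF exchange_big /=; apply: eq_bigr => l _.
rewrite mxE mulr_suml; apply: eq_bigr => k _.
by rewrite !mxE.
Qed.

Lemma QF_add (R : realType) (n : nat) (A B : 'M[R]_n) x : QF (A + B) x = QF A x + QF B x.
Proof.
rewrite /QF -big_split /=; apply: eq_bigr => i _; rewrite -big_split /=; apply: eq_bigr => j _.
by rewrite mxE; ring.
Qed.

Lemma QF_0 (R : realType) (n : nat) x : QF (0 : 'M[R]_n) x = 0.
Proof. by rewrite /QF big1 // => i _; rewrite big1 // => j _; rewrite mxE mulr0 mul0r. Qed.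

Lemma QF_sum (R : realType) (n : nat) (I : Type) (r : seq I) (P : pred I) (F : I -> 'M[R]_n) x :
  QF (\sum_(i <- r | P i) F i) x = \sum_(i <- r | P i) QF (F i) x.
Proof. exact: (big_morph (fun A => QF A x) (fun A B => QF_add A B x) (QF_0 x)). Qed.

Lemma sum_pair (R : realType) (n : nat) (g : 'I_n -> R) (i j : 'I_n) : i != j ->
  (forall k, k != i -> k != j -> g k = 0) -> \sum_k g k = g i + g j.
Proof.
move=> ij H; rewrite (bigD1 i) //= (bigD1 j) /=; last by rewrite eq_sym ij.
rewrite big1 ?addr0 // => k /andP [ki kj]; exact: H.
Qed.

Lemma QF_Psi_ij (R : realType) (N : nat) (i j : 'I_N) (A : 'M[R]_2) x : i != j ->
  QF (Psi_ij i j A) x = qf A (x i) (x j).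
Proof.
move=> ij; rewrite /QF (sum_pair ij); last first.
  move=> k ki kj; apply: big1 => l _; rewrite mxE (negbTE ki) (negbTE kj); ring.
rewrite (sum_pair ij); last by move=> l li lj; rewrite mxE eqxx (negbTE li) (negbTE lj); ring.
rewrite (sum_pair ij); last first.
  by move=> l li lj; rewrite mxE eq_sym (negbTE ij) eqxx (negbTE li) (negbTE lj); ring.
by rewrite !mxE !eqxx eq_sym (negbTE ij) /qf; ring.
Qed.

Lemma QF_Psi (R : realType) (N : nat) (M : pairfam R N) x : QF (Psi M) x = PS M x.
Proof.
rewrite /Psi QF_sum /PS; apply: eq_bigr => i _.
rewrite QF_sum; apply: eq_bigr => j ij.
by rewrite QF_Psi_ij // -(inj_eq val_inj) /= neq_ltn ij.
Qed.

Lemma cV_neq0 (R : realType) (n : nat) (v : 'cV[R]_n) : v != 0 -> exists k, v k 0 != 0.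
Proof.
move=> vn; case: (pselect (exists k, v k 0 != 0)) => // h; exfalso.
move/eqP: vn; apply; apply/matrixP => k l; rewrite ord1 mxE; apply/eqP.
by apply/negPn/negP => hk; apply: h; exists k.
Qed.

Lemma pos_qf (R : realType) (M : 'M[R]_2) x y : PD2 M -> (x != 0) || (y != 0) -> 0 < qf M x y.
Proof.
case=> s [a0 D0] xy.
have e : M 0 0 * qf M x y = (M 0 0 * x + M 0 1 * y) ^+ 2 + det2 M * y ^+ 2.
  by rewrite /qf /det2 s; ring.
suff : 0 < M 0 0 * qf M x y by rewrite pmulr_rgt0.
rewrite e; have [y0|y0] := eqVneq y 0.
  rewrite y0 /= in xy; rewrite y0 expr0n /= mulr0 addr0 mulr0 addr0.
  rewrite eqxx orbF in xy; rewrite lt_neqAle; apply/andP; split; last exact: sqr_ge0.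
  have h : M 0 0 * x != 0 by rewrite mulf_neq0 // gt_eqF.
  by rewrite eq_sym sqrf_eq0.
apply: ltr_wpDl; first exact: sqr_ge0.
by rewrite mulr_gt0 // lt_def sqrf_eq0 y0 sqr_ge0.
Qed.

Lemma ord2_cases (k : 'I_2) : k = 0 \/ k = 1.
Proof. by case: k => [[|[|//]] Hk]; [left|right]; apply: val_inj. Qed.

Lemma posdef_of_PD2 (R : realType) (M : 'M[R]_2) : M^T = M -> PD2 M -> posdef M.
Proof.
move=> s P; split => // v vn; rewrite QF_mx QF2; apply: pos_qf => //.
have [k hk] := cV_neq0 vn.
by case: (ord2_cases k) => ek; rewrite ek in hk; rewrite hk ?orbT.
Qed.

Lemma PD2_of_posdef (R : realType) (M : 'M[R]_2) : posdef M -> PD2 M.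
Proof.
case=> s pd.
have s' : M 1 0 = M 0 1 by rewrite -{1}s mxE.
pose e0 : 'cV[R]_2 := \col_i (if i == 0 then 1 else 0).
have e0n : e0 != 0.
  by apply/eqP => /matrixP/(_ 0 0); rewrite !mxE /= => /eqP; rewrite oner_eq0.
have a0 := pd e0 e0n.
rewrite QF_mx QF2 /qf !mxE /= expr1n expr0n /= !mulr0 !addr0 mulr1 in a0.
pose w : 'cV[R]_2 := \col_i (if i == 0 then - M 0 1 else M 0 0).
have wn : w != 0.
  by apply/eqP => /matrixP/(_ 1 0); rewrite !mxE /= => /eqP; rewrite gt_eqF.
have d0 := pd w wn.
rewrite QF_mx QF2 !mxE /= in d0.
have e : qf M (- M 0 1) (M 0 0) = M 0 0 * det2 M by rewrite /qf /det2 s'; ring.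
rewrite e pmulr_rgt0 // in d0.
Qed.

Lemma posdef_Psi (R : realType) (N : nat) (M : pairfam R N) :
  (2 <= N)%N -> (Psi M)^T = Psi M -> (forall i j : 'I_N, (i < j)%N -> PD2 (M i j)) ->
  posdef (Psi M).
Proof.
move=> N2 s PD; split => // v vn.
rewrite QF_mx QF_Psi.
have [k hk] := cV_neq0 vn.
set x := fun i => v i 0.
have [i0 [j0 [ij h]]] : exists i0 j0 : 'I_N, (i0 < j0)%N /\ ((x i0 != 0) || (x j0 != 0)).
  case hk0: (nat_of_ord k) => [|k'].
    exists k, (Ordinal N2); split; first by rewrite hk0.
    by rewrite /x hk.
  exists (Ordinal (leq_trans (isT : (0 < 2)%N) N2)), k; split; first by rewrite hk0.
  by rewrite /x hk orbT.
rewrite /PS (bigD1 i0) //=.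
have P2 : 0 <= \sum_(i < N | i != i0) \sum_(j < N | (i < j)%N) qf (M i j) (x i) (x j).
  by apply: sumr_ge0 => i _; apply: sumr_ge0 => j hij; apply: qf_ge0; exact: PD.
rewrite (bigD1 j0) //=.
have P3 : 0 <= \sum_(j < N | (i0 < j)%N && (j != j0)) qf (M i0 j) (x i0) (x j).
  by apply: sumr_ge0 => j /andP [hij _]; apply: qf_ge0; exact: PD.
have P1 : 0 < qf (M i0 j0) (x i0) (x j0) by apply: pos_qf => //; exact: PD.
lra.
Qed.

Lemma PD2_scalar (R : realType) (a : R) : 0 < a -> PD2 (a%:M : 'M[R]_2).
Proof.
move=> a0; rewrite /PD2 /det2 !mxE /=.
split; first by [].
split; first by [].
by rewrite mulr1n expr0n /= subr0 mulr_gt0.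
Qed.

Theorem corollary4p5 (R : realType) (N : nat) (M : pairfam R N) :
  (2 <= N)%N ->
  (forall i j : 'I_N, (i < j)%N -> (M i j)^T = M i j) ->
  DD (Psi M) ->
  ((- phiDD M >= - phiSDD M)%E /\ (- phiSDD M >= - hfun (Psi M))%E) /\
  ((forall i j : 'I_N, (i < j)%N -> M i j = ((N.-1)%:R)^-1%:M) ->
     Psi M = 1%:M /\
     (- phiDD M = - phiSDD M)%E /\ (- phiSDD M = - hfun (Psi M))%E /\
     (- hfun (Psi M) = ((N * N.-1)%:R * ln ((N.-1)%:R))%:E)%E).
Proof.
move=> N2 Msym [Ysym _].
have Ms : forall i j : 'I_N, (i < j)%N -> M i j 1 0 = M i j 0 1.
  by move=> i j ij; rewrite -{1}(Msym i j ij) mxE.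
split; first split.
- rewrite leeN2 /phiDD /phiSDD; apply: lee_sum => i _; apply: lee_sum => j ij.
  case: ifP => [/andP [h1 h2]|_]; last exact: leNye.
  set a := M i j 0 0 in h1 *; set b := M i j 0 1 in h1 h2 *; set c := M i j 1 1 in h2 *.
  have nb := normr_ge0 b.
  have bb : b ^+ 2 = `|b| ^+ 2 by rewrite real_normK // num_real.
  have a0 : 0 < a by apply: le_lt_trans h1.
  have D0 : 0 < a * c - b ^+ 2 by rewrite bb; nra.
  have PD : PD2 (M i j) by split; [exact: Ms | split].
  rewrite asboolT; last exact: posdef_of_PD2 (Msym i j ij) PD.
  rewrite lee_fin.
  have u0 : 0 < a ^+ 2 - b ^+ 2 by rewrite bb; nra.
  have w0 : 0 < c ^+ 2 - b ^+ 2 by rewrite bb; nra.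
  rewrite -lnMp //.
  have : ln ((a ^+ 2 - b ^+ 2) * (c ^+ 2 - b ^+ 2)) <= ln ((a * c - b ^+ 2) ^+ 2).
    rewrite ler_ln ?posrE ?mulr_gt0 ?exprn_gt0 // -subr_ge0.
    have -> : (a * c - b ^+ 2) ^+ 2 - (a ^+ 2 - b ^+ 2) * (c ^+ 2 - b ^+ 2) = b ^+ 2 * (a - c) ^+ 2 by ring.
    by rewrite mulr_ge0 ?sqr_ge0.
  rewrite lnXn // => h; lra.
- case: (pselect (forall i j : 'I_N, (i < j)%N -> PD2 (M i j))) => [allPD | notall].
    have pdY := posdef_Psi N2 Ysym allPD.
    rewrite /hfun asboolT //.
    have -> : phiSDD M = (\sum_(i < N) \sum_(j < N | (i < j)%N) ln (det2 (M i j)))%:E.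
      rewrite /phiSDD -sumEFin; apply: eq_bigr => i _; rewrite -sumEFin; apply: eq_bigr => j ij.
      by rewrite asboolT //; exact: posdef_of_PD2 (Msym _ _ ij) (allPD _ _ ij).
    rewrite leeN2 lee_fin.
    case: N M N2 Msym Ysym Ms allPD pdY => [//|n] M N2 Msym Ysym Ms allPD pdY /=.
    have n0 : (0 < n)%N by [].
    have [_ K] := key n0 Ysym allPD (fun x => ltac:(by rewrite QF_Psi)).
    lra.
  have [i0 [j0 [ij np]]] : exists i j : 'I_N, (i < j)%N /\ ~ posdef (M i j).
    case: (pselect (exists i j : 'I_N, (i < j)%N /\ ~ posdef (M i j))) => // hn; exfalso.
    apply: notall => i j ij; apply: PD2_of_posdef.
    by case: (pselect (posdef (M i j))) => // hnp; exfalso; apply: hn; exists i, j.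
  have -> : phiSDD M = (-oo)%E.
    apply/esum_eqNyP; exists i0; split; [by rewrite mem_index_enum | by [] | ].
    apply/esum_eqNyP; exists j0; split; [by rewrite mem_index_enum | by [] | ].
    by rewrite asboolF.
  by rewrite leey.
move=> Meq.
set a : R := ((N.-1)%:R)^-1.
have n1 : 0 < (N.-1)%:R :> R by rewrite ltr0n; case: N M N2 {Msym Ysym Ms Meq a} => [|[|n]].
have a0 : 0 < a by rewrite /a invr_gt0.
have e00 : (0 == 0 :> 'I_2) = true by [].
have e01 : (0 == 1 :> 'I_2) = false by [].
have e10 : (1 == 0 :> 'I_2) = false by [].
have e11 : (1 == 1 :> 'I_2) = true by [].
have allPD : forall i j : 'I_N, (i < j)%N -> PD2 (M i j).
  by move=> i j ij; rewrite Meq //; exact: PD2_scalar.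
have PsiE : Psi M = 1%:M.
  apply/matrixP => k l; rewrite /Psi summxE.
  pose g := fun t : 'I_N => if (k == t) && (l == t) then a else 0.
  transitivity (\sum_(i < N) \sum_(j < N | (i < j)%N) (g i + g j)).
    apply: eq_bigr => i _; rewrite summxE; apply: eq_bigr => j ij.
    have ij' : (i == j) = false by apply/negbTE; rewrite -(inj_eq val_inj) /= neq_ltn ij.
    rewrite Meq // !mxE e00 e01 e10 e11 /g /= mulr1n mulr0n -/a.
    have [->|ki] := eqVneq k i.
      by rewrite /= ij' /= addr0; case: (l == i); case: (l == j).
    have [kj|kj] := eqVneq k j.
      rewrite /= add0r; have [li|li] := eqVneq l i; first by rewrite li ij'.
      by [].
    by rewrite /= addr0.
  rewrite pairsum (bigD1 k) //= big1 ?addr0; last first.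
    by move=> t tk; rewrite /g eq_sym (negbTE tk).
  rewrite /g eqxx /= !mxE eq_sym.
  by case: (k == l); rewrite ?mulr0 // /a mulfV // gt_eqF.
have pd1 : posdef (1%:M : 'M[R]_N) by rewrite -PsiE; exact: posdef_Psi.
have termE : forall i j : 'I_N, (i < j)%N ->
    (if `[< posdef (M i j) >] then (ln (M i j 0 0 * M i j 1 1 - M i j 0 1 ^+ 2))%:E else -oo)%E
    = (ln a + ln a)%:E.
  move=> i j ij; rewrite asboolT; last by exact: posdef_of_PD2 (Msym _ _ ij) (allPD _ _ ij).
  by rewrite Meq // !mxE e00 e01 e11 /= mulr1n mulr0n expr0n /= subr0 lnMp.
have DDE : phiDD M = phiSDD M.
  rewrite /phiDD /phiSDD; apply: eq_bigr => i _; apply: eq_bigr => j ij.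
  rewrite termE // Meq // !mxE e00 e01 e11 /= mulr1n mulr0n normr0 a0 /= expr0n /= subr0.
  by rewrite lnXn // mulr2n; congr (_%:E); field.
have SDDE : phiSDD M = (- (N * N.-1)%:R * ln (N.-1)%:R)%:E.
  rewrite /phiSDD.
  transitivity ((\sum_(i < N) \sum_(j < N | (i < j)%N) (((ln a + ln a) / 2 + (ln a + ln a) / 2)%:E))%E).
    by apply: eq_bigr => i _; apply: eq_bigr => j ij; rewrite termE //; congr (_%:E); field.
  under eq_bigr do rewrite sumEFin.
  rewrite sumEFin (pairsum (fun _ : 'I_N => (ln a + ln a) / 2)) sumr_const card_ord.
  by congr (_%:E); rewrite /a lnV ?posrE // natrM -mulr_natl; field.
have hE : hfun (Psi M) = (- (N * N.-1)%:R * ln (N.-1)%:R)%:E.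
  by rewrite PsiE /hfun asboolT // det1 ln1 mulr0 sub0r mulNr.
split => //; split; first by rewrite DDE.
split; first by rewrite SDDE hE.
by rewrite hE /= mulNr opprK.
Qed.
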